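(* Let $a>0$ and let $\epsilon>0$ be sufficiently small. For any solution $(x,v(x))$ of the regularized system $$\dot x=1,\qquad \epsilon\dot v=-a\epsilon v-\sin\!\left(\pi x\left[1+\tfrac12\psi(v)\right]\right)$$ there exists $x_T\ge0$ such that for all $x\ge x_T$ the solution is constrained in $V_0\cup V_-=\{(x,v):v<1\}$.
   Context: $\psi:\mathbb{R}\to\mathbb{R}$ is a transition function: $C^1$ on $\mathbb{R}$ and $C^2$ on $[-1,1]$, with $\psi(v)=\operatorname{sign}(v)$ for $|v|\ge1$, $\psi'(v)>0$ for $|v|<1$, and $\operatorname{sign}\psi''(v)=-\operatorname{sign}(v)$ at $|v|=1$. $V_0=\{|v|<1\}$ is the switching layer, $V_\pm=\{\pm v\ge1\}$ (note $V_-=\{v\le-1\}$). *)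

(* Defs.v *)
From Stdlib Require Import Reals Lra.
From Coquelicot Require Import Coquelicot.
Open Scope R_scope.

Definition has_deriv_within (f f' : R -> R) (lo hi : R) : Prop :=
  forall x, lo <= x <= hi ->
  forall eps, 0 < eps -> exists delta, 0 < delta /\
    forall y, lo <= y <= hi -> y <> x -> Rabs (y - x) < delta ->
      Rabs ((f y - f x) / (y - x) - f' x) < eps.

Definition continuous_within (g : R -> R) (lo hi : R) : Prop :=
  forall x, lo <= x <= hi ->
  forall eps, 0 < eps -> exists delta, 0 < delta /\
    forall y, lo <= y <= hi -> Rabs (y - x) < delta -> Rabs (g y - g x) < eps.

(* Transition function: C^1 on R, C^2 on [-1,1] (with second derivative psi2),
   psi = sign outside (-1,1), psi' > 0 on (-1,1), and
   sign psi''(v) = - sign v at |v| = 1, i.e. psi''(1) < 0 and psi''(-1) > 0. *)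
Definition transition_function (psi : R -> R) : Prop :=
  (forall v, ex_derive psi v) /\
  (forall v, continuous (Derive psi) v) /\
  (exists psi2 : R -> R,
     has_deriv_within (Derive psi) psi2 (-1) 1 /\
     continuous_within psi2 (-1) 1 /\
     psi2 1 < 0 /\ 0 < psi2 (-1)) /\
  (forall v, 1 <= v -> psi v = 1) /\
  (forall v, v <= -1 -> psi v = -1) /\
  (forall v, -1 < v < 1 -> 0 < Derive psi v).

Definition V0 (v : R) : Prop := Rabs v < 1.
Definition Vminus (v : R) : Prop := v <= -1.

(* (x, v(x)) is a solution of  x' = 1, eps v' = - a eps v - sin(pi x [1 + psi(v)/2]),
   parametrised by x (since x' = 1). *)
Definition is_solution (psi : R -> R) (a eps : R) (v : R -> R) : Prop :=
  exists dv : R -> R, forall x,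
    is_derive v x (dv x) /\
    eps * dv x = - a * eps * v x - sin (PI * x * (1 + / 2 * psi (v x))).

(* Main.v *)
Require Import Defs.
From Stdlib Require Import Reals.
From Coquelicot Require Import Coquelicot.
Open Scope R_scope.
From Stdlib Require Import Reals Lra Lia Classical.
From Coquelicot Require Import Coquelicot.
Require Import Defs.
Open Scope R_scope.

Lemma cont_of_derive f x l : is_derive f x l -> continuity_pt f x.
Proof.
  intro H. apply continuity_pt_filterlim. apply (ex_derive_continuous (K:=R_AbsRing) (V:=R_NormedModule)). exists l; exact H.
Qed.

Lemma cont_eps f x : continuity_pt f x -> forall eps, 0 < eps ->
  exists d, 0 < d /\ forall y, Rabs (y - x) < d -> Rabs (f y - f x) < eps.
Proof.
  intros H eps Heps. destruct (H eps Heps) as [d [Hd H2]].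
  exists d; split; [lra|]. intros y Hy.
  destruct (Req_dec y x) as [->|Hne].
  - rewrite Rminus_diag, Rabs_R0; lra.
  - apply (H2 y). split; [split; [exact I| auto] | exact Hy].
Qed.

Lemma last_crossing (f : R -> R) a b : a < b ->
  (forall x, a <= x <= b -> continuity_pt f x) -> f a <= 0 -> 0 < f b ->
  exists c, a <= c < b /\ f c = 0 /\ forall x, c < x <= b -> 0 < f x.
Proof.
  intros Hab Hc Ha Hb.
  set (E := fun x => a <= x <= b /\ f x <= 0).
  assert (HE : bound E). { exists b. intros x [Hx _]. lra. }
  assert (HE2 : exists x, E x). { exists a. split; [lra|exact Ha]. }
  destruct (completeness E HE HE2) as [c [Hub Hlub]].
  assert (Hac : a <= c). { apply Hub. split; [lra|exact Ha]. }
  assert (Hcb : c <= b). { apply Hlub. intros x [Hx _]. lra. }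
  assert (Hfc : f c <= 0).
  { destruct (Rle_lt_dec (f c) 0) as [h|h]; [exact h|].
    destruct (cont_eps f c (Hc c (conj Hac Hcb)) (f c) h) as [d [Hd Hd2]].
    exfalso.
    assert (Hex : exists x, E x /\ c - d < x).
    { apply NNPP. intro Hn. assert (c <= c - d).
      { apply Hlub. intros x Ex. destruct (Rle_lt_dec x (c - d)) as [h1|h1]; [exact h1|].
        exfalso; apply Hn; exists x; split; assumption. }
      lra. }
    destruct Hex as [x [[Hx Hfx] Hxd]].
    assert (x <= c) by (apply Hub; split; assumption).
    assert (Rabs (x - c) < d) by (apply Rabs_def1; lra).
    specialize (Hd2 x H0). apply Rabs_def2 in Hd2. lra. }
  assert (Hcb' : c < b). { destruct (Req_dec c b) as [->|h]; [lra|lra]. }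
  assert (Hpos : forall x, c < x <= b -> 0 < f x).
  { intros x Hx. destruct (Rle_lt_dec (f x) 0) as [h|h]; [|exact h].
    assert (x <= c) by (apply Hub; split; [lra|exact h]). lra. }
  exists c. split; [lra|]. split; [|exact Hpos].
  destruct (Req_dec (f c) 0) as [h|h]; [exact h|].
  assert (Hneg : f c < 0) by lra.
  destruct (cont_eps f c (Hc c (conj Hac Hcb)) (- f c) ltac:(lra)) as [d [Hd Hd2]].
  set (x := Rmin (c + d/2) b).
  assert (c < x <= b). { unfold x. unfold Rmin; destruct (Rle_dec (c + d/2) b); lra. }
  assert (Rabs (x - c) < d). { apply Rabs_def1; unfold x, Rmin; destruct (Rle_dec (c + d/2) b); lra. }
  specialize (Hd2 x H0). apply Rabs_def2 in Hd2. specialize (Hpos x H). lra.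
Qed.

Lemma deriv_sign g c l b : is_derive g c l -> g c <= 0 -> c < b ->
  (forall y, c < y <= b -> 0 < g y) -> 0 <= l.
Proof.
  intros Hd Hgc Hcb Hpos. apply is_derive_Reals in Hd.
  destruct (Rle_lt_dec 0 l) as [h|h]; [exact h|exfalso].
  destruct (Hd (- l / 2) ltac:(lra)) as [d Hd2].
  set (hh := Rmin (d/2) (b - c)).
  assert (Hd0 := cond_pos d).
  assert (0 < hh /\ hh <= b - c /\ hh < d). { unfold hh, Rmin; destruct (Rle_dec (d/2) (b-c)); lra. }
  assert (Hh : hh <> 0) by lra.
  assert (Rabs hh < d) by (rewrite Rabs_pos_eq; lra).
  specialize (Hd2 hh Hh H0). apply Rabs_def2 in Hd2.
  assert (Hp := Hpos (c + hh) ltac:(lra)).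
  assert ((g (c + hh) - g c) / hh < l / 2) by lra.
  assert (g (c + hh) - g c < l / 2 * hh).
  { apply (Rmult_lt_compat_r hh) in H1; [|lra]. field_simplify in H1; [|lra]. lra. }
  assert (l / 2 * hh < 0). { assert (0 < -l/2 * hh) by (apply Rmult_lt_0_compat; lra). lra. }
  lra.
Qed.

Lemma sin_shift (k : nat) u : sin (PI * (2 * INR k + u)) = sin (PI * u).
Proof. rewrite <- (sin_period (PI * u) k). f_equal. ring. Qed.
Lemma cos_shift (k : nat) u : cos (PI * (2 * INR k + u)) = cos (PI * u).
Proof. rewrite <- (cos_period (PI * u) k). f_equal. ring. Qed.

Lemma sin_lb0 d u : 0 < d <= 1/2 -> d <= u <= 1 - d -> sin (PI * d) <= sin (PI * u).
Proof.
  intros Hd Hu. assert (HP := PI_RGT_0).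
  destruct (Rle_lt_dec u (1/2)) as [h|h].
  - apply sin_incr_1; nra.
  - rewrite <- (sin_PI_x (PI * u)). replace (PI - PI * u) with (PI * (1 - u)) by ring.
    apply sin_incr_1; nra.
Qed.

Lemma sin_lb (k : nat) d t : 0 < d <= 1/2 -> 2 * INR k + d <= t <= 2 * INR k + 1 - d ->
  sin (PI * d) <= sin (PI * t).
Proof.
  intros Hd Ht. replace t with (2 * INR k + (t - 2 * INR k)) by ring.
  rewrite sin_shift. apply sin_lb0; lra.
Qed.

Lemma sin_pos_d d : 0 < d <= 1/2 -> 0 < sin (PI * d).
Proof. intros. assert (HP := PI_RGT_0). apply sin_gt_0; nra. Qed.

Section PsiFacts.
Variable psi : R -> R.
Hypothesis Hpsi : transition_function psi.

Lemma psi_d x : is_derive psi x (Derive psi x).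
Proof. destruct Hpsi as [H _]. apply Derive_correct. apply H. Qed.

Lemma psi_cont x : continuity_pt psi x.
Proof. apply (cont_of_derive _ _ _ (psi_d x)). Qed.

Lemma psi_le1 v : psi v <= 1.
Proof.
  destruct Hpsi as [_ [_ [_ [H1 [H2 H3]]]]].
  destruct (Rle_lt_dec 1 v) as [h|h]; [rewrite H1; lra|].
  destruct (Rle_lt_dec v (-1)) as [h'|h']; [rewrite H2; lra|].
  destruct (MVT_gen psi v 1 (fun y => Rmax 0 (Derive psi y))) as [c [Hc Heq]].
  - intros x Hx. rewrite Rmin_left in Hx by lra. rewrite Rmax_right in Hx by lra.
    rewrite Rmax_right. apply psi_d. apply Rlt_le, H3. lra.
  - intros; apply psi_cont.
  - rewrite (H1 1) in Heq by lra.
    assert (0 <= Rmax 0 (Derive psi c) * (1 - v)).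
    { apply Rmult_le_pos; [apply Rmax_l|lra]. }
    lra.
Qed.

Lemma interior_deriv (f f' : R -> R) y : has_deriv_within f f' (-1) 1 -> -1 < y < 1 ->
  is_derive f y (f' y).
Proof.
  intros H Hy. apply is_derive_Reals. intros eps Heps.
  destruct (H y ltac:(lra) eps Heps) as [d [Hd H2]].
  assert (Hm : 0 < Rmin d (Rmin (y + 1) (1 - y))).
  { repeat apply Rmin_pos; lra. }
  exists (mkposreal _ Hm). intros h Hh Hlt. simpl in Hlt.
  assert (Hlt1 : Rabs h < d) by (eapply Rlt_le_trans; [exact Hlt| apply Rmin_l]).
  assert (Hlt2 : Rabs h < Rmin (y + 1) (1 - y)) by (eapply Rlt_le_trans; [exact Hlt| apply Rmin_r]).
  assert (Hh1 : Rabs h < y + 1) by (eapply Rlt_le_trans; [exact Hlt2| apply Rmin_l]).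
  assert (Hh2 : Rabs h < 1 - y) by (eapply Rlt_le_trans; [exact Hlt2| apply Rmin_r]).
  apply Rabs_def2 in Hh1. apply Rabs_def2 in Hh2.
  specialize (H2 (y + h) ltac:(lra) ltac:(lra)).
  replace (y + h - y) with h in H2 by ring. apply H2. exact Hlt1.
Qed.

Lemma psi_c0 : exists c0, 0 < c0 /\ forall v, -1 < v < 1 -> 1/2 <= psi v -> psi v < 1 ->
  c0 * (1 - psi v) <= Derive psi v.
Proof.
  destruct Hpsi as [Hex [Hdc [[psi2 [Hd2 [Hc2 [Hp1 Hm1]]]] [H1 [H2 H3]]]]].
  destruct (Hc2 1 ltac:(lra) (- psi2 1 / 2) ltac:(lra)) as [d [Hd Hd']].
  set (w0 := Rmin (d/2) (1/2)).
  assert (Hw0 : 0 < w0 <= 1/2 /\ w0 < d). { unfold w0, Rmin; destruct (Rle_dec (d/2) (1/2)); lra. }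
  assert (Hneg : forall y, 1 - w0 <= y <= 1 -> psi2 y < 0).
  { intros y Hy. assert (Rabs (y - 1) < d) by (apply Rabs_def1; lra).
    specialize (Hd' y ltac:(lra) H). apply Rabs_def2 in Hd'. lra. }
  assert (Hdec : forall u u', 1 - w0 <= u -> u <= u' -> u' <= 1 -> Derive psi u' <= Derive psi u).
  { intros u u' Hu Huu Hu'.
    destruct (Req_dec u u') as [->|hne]; [lra|].
    destruct (MVT_gen (Derive psi) u u' psi2) as [c [Hc Heq]].
    - intros x Hx. rewrite Rmin_left in Hx by lra. rewrite Rmax_right in Hx by lra.
      apply (interior_deriv _ _ _ Hd2). lra.
    - intros x _. apply continuity_pt_filterlim. apply Hdc.
    - rewrite Rmin_left in Hc by lra. rewrite Rmax_right in Hc by lra.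
      assert (psi2 c < 0) by (apply Hneg; lra).
      assert (psi2 c * (u' - u) <= 0) by (apply Rmult_le_0_r; lra). lra. }
  destruct (cont_eps psi (-1) (psi_cont (-1)) 1 ltac:(lra)) as [da [Hda Hda']].
  rewrite (H2 (-1)) in Hda' by lra.
  set (al := -1 + Rmin (da/2) (1/2)).
  assert (Hal : -1 < al <= -1/2 /\ al < -1 + da). { unfold al, Rmin; destruct (Rle_dec (da/2) (1/2)); lra. }
  destruct (continuity_ab_min (Derive psi) al (1 - w0) ltac:(lra)) as [mx [Hmx1 Hmx2]].
  { intros c _. apply continuity_pt_filterlim. apply Hdc. }
  assert (Hm : 0 < Derive psi mx) by (apply H3; lra).
  exists (Rmin (Derive psi mx) (/ w0)). split.
  { apply Rmin_pos; [lra| apply Rinv_0_lt_compat; lra]. }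
  intros v Hv Hp Hpl1.
  destruct (Rle_lt_dec v al) as [hva|hva].
  { exfalso. assert (Rabs (v - -1) < da) by (apply Rabs_def1; lra).
    specialize (Hda' v H). apply Rabs_def2 in Hda'. lra. }
  destruct (Rle_lt_dec v (1 - w0)) as [hv|hv].
  - specialize (Hmx1 v ltac:(lra)).
    assert (Rmin (Derive psi mx) (/ w0) * (1 - psi v) <= Derive psi mx * (1 - psi v)).
    { apply Rmult_le_compat_r; [lra| apply Rmin_l]. }
    nra.
  - destruct (MVT_gen psi v 1 (Derive psi)) as [c [Hc Heq]].
    + intros; apply psi_d.
    + intros; apply psi_cont.
    + rewrite Rmin_left in Hc by lra. rewrite Rmax_right in Hc by lra.
      rewrite (H1 1) in Heq by lra.
      assert (Derive psi c <= Derive psi v) by (apply Hdec; lra).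
      assert (0 < Derive psi v) by (apply H3; lra).
      assert (1 - psi v <= Derive psi v * w0).
      { rewrite Heq. assert (Derive psi c * (1 - v) <= Derive psi v * (1 - v)) by (apply Rmult_le_compat_r; lra).
        assert (Derive psi v * (1 - v) <= Derive psi v * w0) by (apply Rmult_le_compat_l; lra). lra. }
      assert (Rmin (Derive psi mx) (/ w0) * (1 - psi v) <= / w0 * (1 - psi v)).
      { apply Rmult_le_compat_r; [lra| apply Rmin_r]. }
      assert (/ w0 * (1 - psi v) <= Derive psi v).
      { apply (Rmult_le_reg_r w0); [lra|]. field_simplify; [|lra]. lra. }
      lra.
Qed.
End PsiFacts.
Section Sol.
Variable psi : R -> R.
Hypothesis Hpsi : transition_function psi.
Variables a eps : R.
Hypothesis Ha : 0 < a.
Hypothesis Heps : 0 < eps.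
Variables v dv : R -> R.
Hypothesis Hsol : forall x, is_derive v x (dv x) /\
    eps * dv x = - a * eps * v x - sin (PI * x * (1 + / 2 * psi (v x))).

Definition phi x := x * (1 + / 2 * psi (v x)).

Lemma v_d x : is_derive v x (dv x).
Proof. apply Hsol. Qed.

Lemma v_cont x : continuity_pt v x.
Proof. apply (cont_of_derive _ _ _ (v_d x)). Qed.

Lemma dv_eq x : eps * dv x = - a * eps * v x - sin (PI * phi x).
Proof. rewrite (proj2 (Hsol x)). unfold phi. replace (PI * x * (1 + / 2 * psi (v x))) with (PI * (x * (1 + / 2 * psi (v x)))) by ring. reflexivity. Qed.

Lemma is_derive_eq (f : R -> R) x l l' : is_derive f x l -> l = l' -> is_derive f x l'.
Proof. intros H <-; exact H. Qed.

Lemma phi_d x : is_derive phi x (1 + / 2 * psi (v x) + x * (/ 2 * (dv x * Derive psi (v x)))).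
Proof.
  unfold phi.
  assert (H1 : is_derive (fun s => psi (v s)) x (dv x * Derive psi (v x))).
  { apply (is_derive_comp psi v x (Derive psi (v x)) (dv x)); [apply psi_d; exact Hpsi | apply v_d]. }
  assert (H2 : is_derive (fun s => 1 + / 2 * psi (v s)) x (/ 2 * (dv x * Derive psi (v x)))).
  { eapply is_derive_eq.
    - apply (@is_derive_plus R_AbsRing R_NormedModule (fun _ => 1) (fun s => / 2 * psi (v s))).
      + apply is_derive_const.
      + apply is_derive_scal. exact H1.
    - unfold plus, zero; simpl. ring. }
  eapply is_derive_eq.
  - apply (@is_derive_mult R_AbsRing (fun s => s) (fun s => 1 + / 2 * psi (v s))).
    + apply is_derive_id.
    + exact H2.
    + intros; apply Rmult_comm.
  - unfold plus, mult, one; simpl. ring.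
Qed.

Lemma phi_cont x : continuity_pt phi x.
Proof. apply (cont_of_derive _ _ _ (phi_d x)). Qed.

Lemma phi_v1 x : 1 <= v x -> phi x = 3 / 2 * x.
Proof. intro h. destruct Hpsi as [_ [_ [_ [H1 _]]]]. unfold phi. rewrite H1 by exact h. field. Qed.

Lemma phi_lt_v x : phi x < 3 / 2 * x -> v x < 1.
Proof. intro h. destruct (Rlt_le_dec (v x) 1) as [h'|h']; [exact h'|]. rewrite phi_v1 in h; lra. Qed.

Lemma phi_le x : 0 <= x -> phi x <= 3 / 2 * x.
Proof. intro hx. unfold phi. assert (psi (v x) <= 1) by (apply psi_le1; exact Hpsi). nra. Qed.

Variables c0 s1 D : R.
Hypothesis Hc0 : 0 < c0 /\ forall w, -1 < w < 1 -> 1/2 <= psi w -> psi w < 1 ->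
  c0 * (1 - psi w) <= Derive psi w.
Hypothesis Hs1 : 0 < s1.
Hypothesis HD : 0 < D.
Hypothesis He1 : a * eps <= s1 / 2.
Hypothesis He3 : 3 * eps < s1 * c0 * D.

Lemma barrier L p q : 0 < p -> p <= q -> s1 <= sin (PI * L) -> phi p <= L ->
  D <= 3 / 2 * p - L -> 5 / 4 * q <= L -> forall s, p <= s <= q -> phi s <= L.
Proof.
  intros Hp Hpq HsL HpL HD2 Hq s Hs.
  destruct (Rle_lt_dec (phi s) L) as [h|h]; [exact h|exfalso].
  assert (Hps : p < s). { destruct (Req_dec p s) as [<-|hn]; lra. }
  destruct (last_crossing (fun x => phi x - L) p s Hps) as [c [Hc [Hgc Hpos]]].
  - intros x _. apply continuity_pt_minus; [apply phi_cont| apply continuity_pt_const; intros ??; reflexivity].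
  - lra.
  - lra.
  - assert (Hd := phi_d c).
    assert (Hdg : is_derive (fun x => phi x - L) c (1 + / 2 * psi (v c) + c * (/ 2 * (dv c * Derive psi (v c))))).
    { eapply is_derive_eq.
      - apply (@is_derive_minus R_AbsRing R_NormedModule phi (fun _ => L)); [exact Hd| apply is_derive_const].
      - unfold minus, plus, opp, zero; simpl. ring. }
    assert (Hge := deriv_sign _ c _ s Hdg ltac:(lra) ltac:(lra) Hpos).
    assert (Hphic : phi c = L) by lra.
    assert (Hcpos : 0 < c) by lra.
    assert (Hpsic : psi (v c) = 2 * L / c - 2).
    { unfold phi in Hphic. apply (Rmult_eq_reg_l c); [|lra]. field_simplify; [|lra]. lra. }
    assert (Hcq : c <= q) by lra.
    assert (Hpsi1 : 1/2 <= psi (v c)).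
    { rewrite Hpsic. assert (5/4 * c <= L) by lra.
      apply (Rmult_le_reg_r c); [lra|]. field_simplify; [|lra]. lra. }
    assert (Hc1 : c * (1 - psi (v c)) >= 2 * D).
    { rewrite Hpsic. field_simplify; [|lra]. lra. }
    assert (Hpsi2 : psi (v c) < 1).
    { assert (0 < c * (1 - psi (v c))) by lra. nra. }
    destruct Hpsi as [_ [_ [_ [H1 [H2 H3]]]]].
    assert (Hv1 : v c < 1). { destruct (Rlt_le_dec (v c) 1); [assumption|]. rewrite H1 in Hpsi2; lra. }
    assert (Hv2 : -1 < v c). { destruct (Rlt_le_dec (-1) (v c)); [assumption|]. rewrite H2 in Hpsi1; lra. }
    assert (HDer := proj2 Hc0 (v c) (conj Hv2 Hv1) Hpsi1 Hpsi2).
    assert (HP : 2 * c0 * D <= c * Derive psi (v c)).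
    { assert (c0 * (c * (1 - psi (v c))) <= c * Derive psi (v c)).
      { replace (c0 * (c * (1 - psi (v c)))) with (c * (c0 * (1 - psi (v c)))) by ring.
        apply Rmult_le_compat_l; lra. }
      assert (c0 * (2 * D) <= c0 * (c * (1 - psi (v c)))) by (apply Rmult_le_compat_l; lra).
      lra. }
    assert (Hdv : eps * dv c <= - s1 / 2).
    { rewrite dv_eq, Hphic. assert (- (a * eps) <= a * eps * v c) by (assert (0 < a * eps) by (apply Rmult_lt_0_compat; lra); nra). lra. }
    assert (0 < c0 * D) by (apply Rmult_lt_0_compat; [exact (proj1 Hc0)|lra]).
    set (P := c * Derive psi (v c)) in *.
    assert (HdvP : eps * (dv c * P) <= - s1 * c0 * D).
    { replace (eps * (dv c * P)) with ((eps * dv c) * P) by ring.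
      assert ((eps * dv c) * P <= (- s1 / 2) * P) by (apply Rmult_le_compat_r; lra).
      assert ((- s1 / 2) * P <= (- s1 / 2) * (2 * c0 * D)) by (apply Rmult_le_compat_neg_l; lra).
      lra. }
    assert (Hg : eps * (1 + / 2 * psi (v c) + c * (/ 2 * (dv c * Derive psi (v c)))) < 0).
    { replace (eps * (1 + / 2 * psi (v c) + c * (/ 2 * (dv c * Derive psi (v c)))))
        with (eps * (1 + / 2 * psi (v c)) + / 2 * (eps * (dv c * P))) by (unfold P; ring).
      assert (eps * (1 + / 2 * psi (v c)) <= eps * (3/2)) by (apply Rmult_le_compat_l; lra).
      lra. }
    assert (eps * (1 + / 2 * psi (v c) + c * (/ 2 * (dv c * Derive psi (v c)))) >= 0).
    { apply Rle_ge, Rmult_le_pos; lra. }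
    lra.
Qed.

Lemma chain x L : 0 < x -> L = 3 / 2 * x - D -> 12 <= L -> D <= 1/5 -> s1 <= sin (PI * L) ->
  phi x <= L -> forall s, x <= s -> v s < 1.
Proof.
  intros Hx HL HL12 HD5 HsL Hphi.
  assert (Hn : forall n : nat, phi (x + 4/3 * INR n) <= L + 2 * INR n /\
     forall s, x <= s <= x + 4/3 * INR n -> v s < 1).
  { induction n as [|n [IH1 IH2]].
    - simpl. rewrite !Rmult_0_r, !Rplus_0_r. split; [exact Hphi|].
      intros s Hs. replace s with x by lra. apply phi_lt_v. lra.
    - assert (HS : INR (S n) = INR n + 1) by (rewrite S_INR; ring).
      assert (Hn0 := pos_INR n).
      assert (Hb : forall s, x + 4/3 * INR n <= s <= x + 4/3 * INR (S n) -> phi s <= L + 2 * INR n).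
      { apply (barrier (L + 2 * INR n) (x + 4/3 * INR n) (x + 4/3 * INR (S n))).
        - lra.
        - rewrite HS; lra.
        - replace (PI * (L + 2 * INR n)) with (PI * L + 2 * INR n * PI) by ring.
          rewrite sin_period. exact HsL.
        - exact IH1.
        - lra.
        - rewrite HS. lra. }
      split.
      + assert (phi (x + 4/3 * INR (S n)) <= L + 2 * INR n) by (apply Hb; rewrite HS; lra).
        rewrite HS in *. lra.
      + intros s Hs. destruct (Rle_lt_dec s (x + 4/3 * INR n)) as [h|h].
        * apply IH2; lra.
        * apply phi_lt_v. assert (phi s <= L + 2 * INR n) by (apply Hb; lra). lra. }
  intros s Hs. destruct (INR_archimed (4/3) (s - x) ltac:(lra)) as [n Hn'].
  apply (proj2 (Hn n)). lra.
Qed.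
End Sol.
Section GFacts.
Variable a : R.
Hypothesis Ha : 0 < a.
Definition om := 3 * PI / 2.
Definition G s := exp (a * s) * (a * sin (om * s) - om * cos (om * s)) / (a ^ 2 + om ^ 2).

Lemma om_pos : 0 < om.
Proof. unfold om. assert (HP := PI_RGT_0). lra. Qed.

Lemma den_pos : 0 < a ^ 2 + om ^ 2.
Proof. assert (HP := om_pos). nra. Qed.

Lemma G_d s : is_derive G s (exp (a * s) * sin (om * s)).
Proof.
  unfold G. assert (Hd := den_pos). auto_derive; [exact I|].
  field. nra.
Qed.

Lemma sin_om s (k : nat) : sin (om * s) = sin (PI * (3/2 * s - 2 * INR k)).
Proof.
  replace (om * s) with (PI * (2 * INR k + (3/2 * s - 2 * INR k))) by (unfold om; field).
  apply sin_shift.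
Qed.
Lemma cos_om s (k : nat) : cos (om * s) = cos (PI * (3/2 * s - 2 * INR k)).
Proof.
  replace (om * s) with (PI * (2 * INR k + (3/2 * s - 2 * INR k))) by (unfold om; field).
  apply cos_shift.
Qed.

Lemma G_up u1 u2 : u1 <= u2 -> (forall s, u1 <= s <= u2 -> 0 <= sin (om * s)) -> G u1 <= G u2.
Proof.
  intros H12 Hs.
  destruct (MVT_gen G u1 u2 (fun s => exp (a * s) * sin (om * s))) as [c [Hc Heq]].
  - intros; apply G_d.
  - intros x _; apply (cont_of_derive _ _ _ (G_d x)).
  - rewrite Rmin_left in Hc by lra. rewrite Rmax_right in Hc by lra.
    assert (0 <= exp (a * c) * sin (om * c)) by (apply Rmult_le_pos; [apply Rlt_le, exp_pos| apply Hs; lra]).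
    assert (0 <= exp (a * c) * sin (om * c) * (u2 - u1)) by (apply Rmult_le_pos; lra).
    lra.
Qed.

Lemma G_down u1 u2 : u1 <= u2 -> (forall s, u1 <= s <= u2 -> sin (om * s) <= 0) -> G u2 <= G u1.
Proof.
  intros H12 Hs.
  destruct (MVT_gen G u1 u2 (fun s => exp (a * s) * sin (om * s))) as [c [Hc Heq]].
  - intros; apply G_d.
  - intros x _; apply (cont_of_derive _ _ _ (G_d x)).
  - rewrite Rmin_left in Hc by lra. rewrite Rmax_right in Hc by lra.
    assert (exp (a * c) * sin (om * c) <= 0).
    { assert (0 < exp (a * c)) by apply exp_pos. specialize (Hs c ltac:(lra)). nra. }
    assert (exp (a * c) * sin (om * c) * (u2 - u1) <= 0) by (apply Rmult_le_0_r; lra).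
    lra.
Qed.

Lemma G_eval (k : nat) eta x : 3/2 * x = 2 * INR k + 1 - eta ->
  G x = exp (a * x) * (a * sin (PI * eta) + om * cos (PI * eta)) / (a ^ 2 + om ^ 2).
Proof.
  intro Hx. unfold G. rewrite (sin_om x k), (cos_om x k).
  replace (PI * (3 / 2 * x - 2 * INR k)) with (PI - PI * eta) by (rewrite Hx; ring).
  rewrite sin_PI_x, Rtrigo_facts.cos_pi_minus. field. assert (H := den_pos). lra.
Qed.

Lemma G_shift x : G (x - 4/3) = exp (- (a * (4/3))) * G x.
Proof.
  unfold G.
  replace (om * (x - 4/3)) with (om * x + - (2 * PI)) by (unfold om; field).
  assert (Hs : sin (om * x + - (2 * PI)) = sin (om * x)).
  { rewrite <- (sin_period (om * x + - (2 * PI)) 1). f_equal. simpl. ring. }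
  assert (Hc : cos (om * x + - (2 * PI)) = cos (om * x)).
  { rewrite <- (cos_period (om * x + - (2 * PI)) 1). f_equal. simpl. ring. }
  rewrite Hs, Hc.
  replace (a * (x - 4/3)) with (a * x + - (a * (4/3))) by ring. rewrite exp_plus.
  field. assert (H := den_pos). lra.
Qed.

Lemma G_max (k : nat) eta xb : 0 <= eta <= 1/2 -> exp (- a) <= cos (PI * eta) ->
  3/2 * xb = 2 * INR k + 3 - eta -> forall s, xb - 4/3 <= s <= xb -> G s <= G xb.
Proof.
  intros Heta Hcos Hxb s Hs.
  assert (HP := PI_RGT_0).
  set (sA := xb - 2/3 * (2 - eta)). set (sB := xb - 2/3 * (1 - eta)).
  assert (HGA : G sA <= G xb).
  { rewrite (G_eval k 0 sA) by (unfold sA; lra).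
    rewrite (G_eval (S k) eta xb) by (rewrite S_INR; lra).
    rewrite Rmult_0_r, sin_0, cos_0.
    assert (Hd := den_pos). assert (Ho := om_pos).
    assert (exp (a * sA) <= exp (a * xb) * exp (- a)).
    { rewrite <- exp_plus. assert (Hle : a * sA <= a * xb + - a) by (unfold sA; nra).
      destruct (Rle_lt_or_eq_dec _ _ Hle) as [e|e]; [apply Rlt_le, exp_increasing; exact e| rewrite e; lra]. }
    assert (0 <= a * sin (PI * eta)) by (apply Rmult_le_pos; [lra| apply sin_ge_0; nra]).
    apply Rmult_le_compat_r; [apply Rlt_le, Rinv_0_lt_compat; lra|].
    assert (exp (a * xb) * exp (- a) <= exp (a * xb) * cos (PI * eta)) by (apply Rmult_le_compat_l; [apply Rlt_le, exp_pos|lra]).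
    assert (0 < exp (a * xb)) by apply exp_pos.
    nra. }
  destruct (Rle_lt_dec s sA) as [h1|h1].
  - assert (G s <= G sA).
    { apply G_up; [lra|]. intros y Hy. rewrite (sin_om y k). apply sin_ge_0; unfold sA in Hy; nra. }
    lra.
  - destruct (Rle_lt_dec s sB) as [h2|h2].
    + assert (G s <= G sA).
      { apply G_down; [lra|]. intros y Hy. rewrite (sin_om y k).
        assert (1 <= 3/2 * y - 2 * INR k <= 2) by (unfold sA, sB in *; lra).
        apply sin_le_0; nra. }
      lra.
    + apply G_up; [lra|]. intros y Hy. rewrite (sin_om y (S k)). rewrite S_INR.
      assert (0 <= 3/2 * y - 2 * (INR k + 1) <= 1) by (unfold sB in *; lra).
      apply sin_ge_0; nra.
Qed.
End GFacts.
Section Fail.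
Variable psi : R -> R.
Hypothesis Hpsi : transition_function psi.
Variables a eps : R.
Hypothesis Ha : 0 < a.
Hypothesis Heps : 0 < eps.
Variables v dv : R -> R.
Hypothesis Hsol : forall x, is_derive v x (dv x) /\
    eps * dv x = - a * eps * v x - sin (PI * x * (1 + / 2 * psi (v x))).

Definition Zf x := exp (a * x) * (v x - 1).
Definition Hf x := G a x / eps + exp (a * x).

Lemma ZH_d s : is_derive (fun x => Zf x + Hf x) s
  (exp (a * s) * (a * (v s - 1) + dv s) + (exp (a * s) * sin (om * s) / eps + a * exp (a * s))).
Proof.
  assert (He : is_derive (fun x => exp (a * x)) s (a * exp (a * s))).
  { auto_derive; [exact I| ring]. }
  assert (Hv1 : is_derive (fun x => v x - 1) s (dv s)).
  { eapply is_derive_eq.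
    - apply (@is_derive_minus R_AbsRing R_NormedModule v (fun _ => 1)); [apply (v_d psi a eps v dv Hsol)| apply is_derive_const].
    - unfold minus, plus, opp, zero; simpl. ring. }
  assert (HZ : is_derive Zf s (exp (a * s) * (a * (v s - 1) + dv s))).
  { eapply is_derive_eq.
    - apply (@is_derive_mult R_AbsRing (fun x => exp (a * x)) (fun x => v x - 1)); [exact He| exact Hv1| intros; apply Rmult_comm].
    - unfold plus, mult; simpl. ring. }
  assert (HH : is_derive Hf s (exp (a * s) * sin (om * s) / eps + a * exp (a * s))).
  { eapply is_derive_eq.
    - apply (@is_derive_plus R_AbsRing R_NormedModule (fun x => G a x / eps) (fun x => exp (a * x))).
      + assert (Hg : is_derive (fun x => / eps * G a x) s (/ eps * (exp (a * s) * sin (om * s))))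
          by (apply is_derive_scal; apply G_d).
        eapply is_derive_ext; [|exact Hg]. intros t; simpl; unfold Rdiv; ring.
      + exact He.
    - unfold plus; simpl. field. lra. }
  eapply is_derive_eq.
  - apply (@is_derive_plus R_AbsRing R_NormedModule Zf Hf); [exact HZ| exact HH].
  - reflexivity.
Qed.

Lemma K_const u1 u2 : u1 <= u2 -> (forall s, u1 <= s <= u2 -> 1 <= v s) ->
  Zf u2 + Hf u2 = Zf u1 + Hf u1.
Proof.
  intros H12 Hv.
  destruct (MVT_gen (fun x => Zf x + Hf x) u1 u2
    (fun s => exp (a * s) * (a * (v s - 1) + dv s) + (exp (a * s) * sin (om * s) / eps + a * exp (a * s)))) as [c [Hc Heq]].
  - intros; apply ZH_d.
  - intros x _; apply (cont_of_derive _ _ _ (ZH_d x)).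
  - rewrite Rmin_left in Hc by lra. rewrite Rmax_right in Hc by lra.
    assert (Hvc : 1 <= v c) by (apply Hv; lra).
    assert (Hdv := dv_eq psi a eps v dv Hsol c).
    rewrite (phi_v1 psi Hpsi v c Hvc) in Hdv.
    replace (PI * (3 / 2 * c)) with (om * c) in Hdv by (unfold om; field).
    assert (Hz : exp (a * c) * (a * (v c - 1) + dv c) + (exp (a * c) * sin (om * c) / eps + a * exp (a * c)) = 0).
    { apply (Rmult_eq_reg_l eps); [|lra].
      replace (eps * (exp (a * c) * (a * (v c - 1) + dv c) + (exp (a * c) * sin (om * c) / eps + a * exp (a * c))))
        with (exp (a * c) * (a * eps * v c + eps * dv c + sin (om * c))) by (field; lra).
      rewrite Hdv. ring. }
    rewrite Hz, Rmult_0_l in Heq. lra.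
Qed.

Variable d1 : R.
Hypothesis Hd1 : 0 < d1 <= 1/3.
Hypothesis Hcos : exp (- a) <= cos (PI * (3/2 * d1)).
Hypothesis He1 : a * eps <= sin (PI * (d1 / 2)) / 2.
Hypothesis He2 : eps <= sin (PI * (d1 / 2)) * d1 / 6.
Hypothesis Hfail : forall x, 9 <= x -> sin (PI * (d1 / 2)) <= sin (PI * (3/2 * x - d1 / 2)) ->
  3/2 * x - d1 / 2 < phi psi v x.

Definition xb (k : nat) := 2/3 * (2 * INR k + 3 - 3/2 * d1).

Lemma vb (k : nat) : (6 <= k)%nat -> 1 < v (xb k).
Proof.
  intro Hk. set (s1 := sin (PI * (d1 / 2))).
  assert (Hs1 : 0 < s1) by (apply sin_pos_d; lra).
  assert (HkR : 6 <= INR k) by (replace 6 with (INR 6) by (simpl; ring); apply le_INR; exact Hk).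
  set (xe := xb k + 2/3 * d1).
  assert (Hxb9 : 9 <= xb k) by (unfold xb; lra).
  assert (Hprop : forall y, xb k <= y <= xe -> -1 < v y /\ eps * dv y <= - s1 / 2).
  { intros y Hy.
    assert (Hy2 : 2 * INR (S k) + 1 - 2 * d1 <= 3/2 * y - d1 / 2 <= 2 * INR (S k) + 1 - d1).
    { rewrite S_INR. unfold xe, xb in Hy. lra. }
    assert (Hsin : s1 <= sin (PI * (3/2 * y - d1 / 2))).
    { apply (sin_lb (S k)); lra. }
    assert (Hf := Hfail y ltac:(lra) Hsin).
    assert (Hle := phi_le psi Hpsi v y ltac:(lra)).
    assert (Hvy : -1 < v y).
    { destruct (Rlt_le_dec (-1) (v y)) as [h|h]; [exact h|].
      destruct Hpsi as [_ [_ [_ [_ [H2 _]]]]]. unfold phi in Hf. rewrite H2 in Hf by exact h. lra. }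
    split; [exact Hvy|].
    assert (Hsp : s1 <= sin (PI * phi psi v y)).
    { apply (sin_lb (S k)); [lra|]. lra. }
    rewrite (dv_eq psi a eps v dv Hsol y).
    assert (- (a * eps) <= a * eps * v y).
    { assert (0 < a * eps) by (apply Rmult_lt_0_compat; lra). nra. }
    unfold s1 in *. lra. }
  destruct (MVT_gen v (xb k) xe dv) as [c [Hc Heq]].
  - intros; apply (v_d psi a eps v dv Hsol).
  - intros; apply (v_cont psi a eps v dv Hsol).
  - rewrite Rmin_left in Hc by (unfold xe; lra). rewrite Rmax_right in Hc by (unfold xe; lra).
    destruct (Hprop c Hc) as [_ Hdc].
    destruct (Hprop xe ltac:(unfold xe; lra)) as [Hve _].
    assert (Hm : eps * (v xe - v (xb k)) <= - s1 / 2 * (2/3 * d1)).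
    { rewrite Heq. replace (xe - xb k) with (2/3 * d1) by (unfold xe; ring).
      replace (eps * (dv c * (2/3 * d1))) with ((eps * dv c) * (2/3 * d1)) by ring.
      apply Rmult_le_compat_r; lra. }
    assert (Hm2 : eps * (v xe - v (xb k)) <= eps * (-2)).
    { unfold s1 in *. lra. }
    assert (v xe - v (xb k) <= -2) by (apply (Rmult_le_reg_l eps); lra).
    lra.
Qed.

Definition kap := (1 - exp (- (a * (4/3)))) * (om * cos (PI * (3/2 * d1))) / ((a ^ 2 + om ^ 2) * eps).

Lemma kap_pos : 0 < kap.
Proof.
  unfold kap. assert (Hd := den_pos a). assert (Ho := om_pos).
  assert (exp (- (a * (4/3))) < 1) by (rewrite <- exp_0; apply exp_increasing; lra).
  assert (0 < cos (PI * (3/2 * d1))) by (assert (Hexpa := exp_pos (- a)); lra).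
  apply Rdiv_lt_0_compat.
  - apply Rmult_lt_0_compat; [lra| apply Rmult_lt_0_compat; lra].
  - apply Rmult_lt_0_compat; lra.
Qed.

Lemma step (k : nat) : (6 <= k)%nat -> Zf (xb (S k)) <= Zf (xb k) - kap.
Proof.
  intro Hk.
  assert (HkR : 6 <= INR k) by (replace 6 with (INR 6) by (simpl; ring); apply le_INR; exact Hk).
  assert (Hx2 : xb (S k) = xb k + 4/3) by (unfold xb; rewrite S_INR; lra).
  assert (Hx2e : 3/2 * xb (S k) = 2 * INR k + 5 - 3/2 * d1) by (unfold xb; rewrite S_INR; lra).
  assert (Hx1pos : 0 < xb k) by (unfold xb; lra).
  set (x1 := xb k) in *. set (x2 := xb (S k)) in *.
  assert (Hv2 : 1 < v x2) by (apply vb; lia).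
  assert (Hd := den_pos a). assert (Ho := om_pos).
  assert (HG2 : G a x2 = exp (a * x2) * (a * sin (PI * (3/2 * d1)) + om * cos (PI * (3/2 * d1))) / (a ^ 2 + om ^ 2)).
  { apply (G_eval a (S (S k))). rewrite !S_INR. lra. }
  assert (Hcpos : 0 < cos (PI * (3/2 * d1))) by (assert (Hexpa := exp_pos (- a)); lra).
  assert (Hspos : 0 <= sin (PI * (3/2 * d1))).
  { assert (HP := PI_RGT_0). apply sin_ge_0; nra. }
  destruct (classic (forall s, x1 <= s <= x2 -> 1 <= v s)) as [Hall|Hex].
  - assert (HK := K_const x1 x2 ltac:(lra) Hall).
    assert (HG1 : G a x1 = exp (- (a * (4/3))) * G a x2).
    { replace x1 with (x2 - 4/3) by lra. apply G_shift. }
    assert (Hex1 : exp (a * x1) <= exp (a * x2)) by (apply Rlt_le, exp_increasing; nra).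
    assert (Hexp1 : 1 <= exp (a * x2)).
    { rewrite <- exp_0. apply Rlt_le, exp_increasing. nra. }
    assert (Hq : (1 - exp (- (a * (4/3)))) * (om * cos (PI * (3/2 * d1))) / (a ^ 2 + om ^ 2) <= G a x2 - G a x1).
    { rewrite HG1. replace (G a x2 - exp (- (a * (4/3))) * G a x2) with ((1 - exp (- (a * (4/3)))) * G a x2) by ring.
      assert (exp (- (a * (4/3))) < 1) by (rewrite <- exp_0; apply exp_increasing; lra).
      unfold Rdiv. rewrite Rmult_assoc. apply Rmult_le_compat_l; [lra|].
      rewrite HG2. unfold Rdiv.
      apply Rmult_le_compat_r; [apply Rlt_le, Rinv_0_lt_compat; lra|].
      assert (0 <= a * sin (PI * (3/2 * d1))) by (apply Rmult_le_pos; lra).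
      assert (0 < om * cos (PI * (3/2 * d1))) by (apply Rmult_lt_0_compat; lra).
      nra. }
    unfold Hf in HK.
    assert (kap <= (G a x2 - G a x1) / eps).
    { unfold kap.
      replace ((1 - exp (- (a * (4 / 3)))) * (om * cos (PI * (3 / 2 * d1))) / ((a ^ 2 + om ^ 2) * eps))
        with ((1 - exp (- (a * (4 / 3)))) * (om * cos (PI * (3 / 2 * d1))) / (a ^ 2 + om ^ 2) * / eps) by (field; lra).
      unfold Rdiv at 3. apply Rmult_le_compat_r; [apply Rlt_le, Rinv_0_lt_compat; lra| exact Hq]. }
    assert (G a x2 / eps - G a x1 / eps = (G a x2 - G a x1) / eps) by (field; lra).
    lra.
  - exfalso.
    apply not_all_ex_not in Hex. destruct Hex as [y Hy].
    apply imply_to_and in Hy. destruct Hy as [Hy Hvy]. apply Rnot_le_lt in Hvy.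
    assert (Hyx2 : y < x2). { destruct (Req_dec y x2) as [->|h]; lra. }
    destruct (last_crossing (fun s => v s - 1) y x2 Hyx2) as [c [Hc [Hc0 Hcp]]].
    + intros x _. apply continuity_pt_minus; [apply (v_cont psi a eps v dv Hsol)| apply continuity_pt_const; intros ??; reflexivity].
    + lra.
    + lra.
    + assert (HK := K_const c x2 ltac:(lra) ltac:(intros s Hs; destruct (Req_dec s c) as [->|hn]; [lra| specialize (Hcp s ltac:(lra)); lra])).
      unfold Zf, Hf in HK. replace (v c - 1) with 0 in HK by lra.
      assert (HGc : G a c <= G a x2).
      { apply (G_max a Ha (S k) (3/2 * d1) x2); [lra|exact Hcos| |lra].
        rewrite !S_INR. lra. }
      assert (exp (a * c) < exp (a * x2)) by (apply exp_increasing; nra).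
      assert (G a c / eps <= G a x2 / eps) by (apply Rmult_le_compat_r; [apply Rlt_le, Rinv_0_lt_compat; lra| exact HGc]).
      assert (0 < exp (a * x2) * (v x2 - 1)) by (apply Rmult_lt_0_compat; [apply exp_pos| lra]).
      lra.
Qed.

Lemma fail_false : False.
Proof.
  assert (Hn : forall n : nat, Zf (xb (6 + n)) <= Zf (xb 6) - INR n * kap).
  { induction n as [|n IH].
    - simpl. lra.
    - replace (6 + S n)%nat with (S (6 + n)) by lia.
      assert (H := step (6 + n) ltac:(lia)). rewrite S_INR. lra. }
  destruct (INR_archimed kap (Zf (xb 6)) kap_pos) as [n Hn'].
  specialize (Hn n).
  assert (Hv := vb (6 + n) ltac:(lia)).
  assert (0 < Zf (xb (6 + n))) by (unfold Zf; apply Rmult_lt_0_compat; [apply exp_pos| lra]).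
  lra.
Qed.
End Fail.

Theorem proposition6 (psi : R -> R) (a : R) :
  transition_function psi -> 0 < a ->
  exists eps0, 0 < eps0 /\
    forall eps, 0 < eps < eps0 ->
    forall v : R -> R, is_solution psi a eps v ->
    exists xT, 0 <= xT /\ forall x, xT <= x -> V0 (v x) \/ Vminus (v x).
Proof.
  intros Hpsi Ha.
  destruct (psi_c0 psi Hpsi) as [c0 [Hc0 Hc0']].
  assert (Hea : exp (- a) < 1) by (rewrite <- exp_0; apply exp_increasing; lra).
  destruct (cont_eps cos 0 (continuity_cos 0) (1 - exp (- a)) ltac:(lra)) as [dd [Hdd Hdd']].
  assert (HP := PI_RGT_0).
  set (d1 := Rmin (1/3) (dd / (2 * PI))).
  assert (Hd1 : 0 < d1 <= 1/3 /\ d1 <= dd / (2 * PI)).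
  { unfold d1. split. split. apply Rmin_pos; [lra| apply Rdiv_lt_0_compat; lra]. apply Rmin_l. apply Rmin_r. }
  assert (Hcos : exp (- a) <= cos (PI * (3/2 * d1))).
  { assert (Hlt : PI * (3/2 * d1) < dd).
    { destruct Hd1 as [_ Hd]. apply (Rmult_le_compat_l (2 * PI)) in Hd; [|lra].
      replace (2 * PI * (dd / (2 * PI))) with dd in Hd by (field; lra). nra. }
    assert (Rabs (PI * (3/2 * d1) - 0) < dd).
    { rewrite Rminus_0_r, Rabs_pos_eq; [lra|]. nra. }
    specialize (Hdd' _ H). rewrite cos_0 in Hdd'. apply Rabs_def2 in Hdd'. lra. }
  set (s1 := sin (PI * (d1 / 2))).
  assert (Hs1 : 0 < s1) by (apply sin_pos_d; lra).
  set (D := d1 / 2).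
  assert (HD : 0 < D) by (unfold D; lra).
  set (eps0 := Rmin (s1 / (2 * a)) (Rmin (s1 * d1 / 6) (s1 * c0 * D / 3))).
  assert (He0 : 0 < eps0).
  { unfold eps0. assert (0 < s1 * c0 * D) by (apply Rmult_lt_0_compat; [apply Rmult_lt_0_compat|]; lra).
    assert (0 < s1 * d1) by (apply Rmult_lt_0_compat; lra).
    repeat apply Rmin_pos; try (apply Rdiv_lt_0_compat; lra). }
  exists eps0. split; [exact He0|].
  intros eps [Heps Heps0] v [dv Hsol].
  assert (He1 : a * eps <= s1 / 2).
  { assert (eps <= s1 / (2 * a)) by (eapply Rle_trans; [apply Rlt_le, Heps0| apply Rmin_l]).
    apply (Rmult_le_compat_l a) in H; [|lra]. replace (a * (s1 / (2 * a))) with (s1 / 2) in H by (field; lra). exact H. }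
  assert (He2 : eps <= s1 * d1 / 6).
  { eapply Rle_trans; [apply Rlt_le, Heps0|]. unfold eps0. eapply Rle_trans; [apply Rmin_r| apply Rmin_l]. }
  assert (He3 : 3 * eps < s1 * c0 * D).
  { assert (eps < s1 * c0 * D / 3).
    { eapply Rlt_le_trans; [apply Heps0|]. unfold eps0. eapply Rle_trans; [apply Rmin_r| apply Rmin_r]. }
    lra. }
  destruct (classic (exists x, 9 <= x /\ s1 <= sin (PI * (3/2 * x - D)) /\ phi psi v x <= 3/2 * x - D))
    as [[x [Hx [Hs Hp]]] | Hn].
  - exists x. split; [lra|]. intros y Hy.
    assert (Hvy : v y < 1).
    { apply (chain psi Hpsi a eps Ha Heps v dv Hsol c0 s1 D (conj Hc0 Hc0') Hs1 HD He1 He3 x (3/2 * x - D));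
        try lra; try assumption; unfold D; lra. }
    destruct (Rle_lt_dec (v y) (-1)) as [h|h].
    + right. unfold Vminus. exact h.
    + left. unfold V0. apply Rabs_def1; lra.
  - exfalso.
    apply (fail_false psi Hpsi a eps Ha Heps v dv Hsol d1 (proj1 Hd1) Hcos He1 He2).
    intros x Hx Hs. fold s1 in Hs. fold D. fold D in Hs.
    destruct (Rlt_le_dec (3/2 * x - D) (phi psi v x)) as [h|h]; [exact h|].
    exfalso. apply Hn. exists x. auto.
Qed.
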